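(* Let $u$ be a smooth solution on $[0,1]\times[0,T]$ of $$u_t=\frac{u_{xx}}{1+u_x^2}+g(x,u)\sqrt{1+u_x^2}$$ satisfying $u(0,t)-u(0,0)=u(1,t)-u(1,0)$ and $u_x(0,t)=u_x(1,t)$ for all $t\in[0,T]$, and let $F(x):=\int_0^x\arctan(t)\,dt=x\arctan x-\log\sqrt{1+x^2}$. Then there is a constant $C>0$ depending only on $\|g\|_{L^\infty}$ such that for all $t\in[0,T]$ $$\partial_t\int_0^1\sqrt{1+u_x^2}\,dx\le C\int_0^1\sqrt{1+u_x^2}\,dx,$$ $$\partial_t\int_0^1F(u_x)\,dx\le C\int_0^1(1+u_x^2)\,dx,$$ $$\partial_t\int_0^1\big(1+u_x^2\big)^{3/2}dx\le C+C\Big(\int_0^1\big(1+u_x^2\big)^{3/2}dx\Big)^3.$$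
   Context: $g\in C^\infty(\mathbb{R}^2)$ is bounded with all derivatives bounded, and 1-periodic in each variable. Subscripts denote partial derivatives. *)

(* Defs.v *)
From Stdlib Require Import Reals Lra ClassicalEpsilon.
Open Scope R_scope.

Definition continuous2 (f : R -> R -> R) : Prop :=
  forall x y eps, 0 < eps -> exists delta, 0 < delta /\
    forall x' y', Rabs (x' - x) < delta -> Rabs (y' - y) < delta ->
      Rabs (f x' y' - f x y) < eps.

Inductive is_pderiv (f : R -> R -> R) : (R -> R -> R) -> Prop :=
| pd_self : is_pderiv f f
| pd_x : forall h h', is_pderiv f h ->
    (forall x y, derivable_pt_lim (fun s => h s y) x (h' x y)) -> is_pderiv f h'
| pd_y : forall h h', is_pderiv f h ->
    (forall x y, derivable_pt_lim (fun s => h x s) y (h' x y)) -> is_pderiv f h'.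

Definition smooth2 (f : R -> R -> R) : Prop :=
  forall h, is_pderiv f h ->
    continuous2 h /\
    (exists hx, forall x y, derivable_pt_lim (fun s => h s y) x (hx x y)) /\
    (exists hy, forall x y, derivable_pt_lim (fun s => h x s) y (hy x y)).

Definition bounded_derivs2 (f : R -> R -> R) : Prop :=
  forall h, is_pderiv f h -> exists B, forall x y, Rabs (h x y) <= B.

Definition periodic2 (f : R -> R -> R) : Prop :=
  forall x y, f (x + 1) y = f x y /\ f x (y + 1) = f x y.

(* Riemann integral of f over [a,b] (its value when f is Riemann integrable,
   which is the case for all continuous integrands used below). *)
Definition integral (f : R -> R) (a b : R) : R :=
  epsilon (inhabits 0)
    (fun I => exists pr : Riemann_integrable f a b, RiemannInt pr = I).

(* F(x) = int_0^x arctan = x arctan x - log sqrt(1+x^2). *)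
Definition Fat (x : R) : R := x * atan x - ln (sqrt (1 + x ^ 2)).

(* Main.v *)
Require Import Defs.
From Stdlib Require Import Reals Lra Psatz ClassicalEpsilon FunctionalExtensionality List.
Open Scope R_scope.

Lemma cpt_of (f : R -> R) x :
  (forall eps, 0 < eps -> exists delta, 0 < delta /\
     forall x', Rabs (x' - x) < delta -> Rabs (f x' - f x) < eps) ->
  continuity_pt f x.
Proof.
  intros H eps Heps. destruct (H eps Heps) as [d [Hd Hf]].
  exists d; split; [lra|]. intros x' [_ Hx']. simpl in *. unfold R_dist in *. apply Hf; auto.
Qed.

Lemma cpt_to (f : R -> R) x : continuity_pt f x ->
  forall eps, 0 < eps -> exists delta, 0 < delta /\
     forall x', Rabs (x' - x) < delta -> Rabs (f x' - f x) < eps.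
Proof.
  intros H eps Heps. destruct (H eps Heps) as [d [Hd Hf]].
  exists d; split; [lra|]. intros x' Hx'.
  destruct (Req_dec x x') as [<-|Hne].
  - rewrite Rminus_diag, Rabs_R0; lra.
  - apply (Hf x'). split; [split; [exact I | exact Hne]| exact Hx'].
Qed.

Lemma cpt_mult f g x : continuity_pt f x -> continuity_pt g x -> continuity_pt (fun y => f y * g y) x.
Proof. apply continuity_pt_mult. Qed.
Lemma cpt_plus f g x : continuity_pt f x -> continuity_pt g x -> continuity_pt (fun y => f y + g y) x.
Proof. apply continuity_pt_plus. Qed.
Lemma cpt_minus f g x : continuity_pt f x -> continuity_pt g x -> continuity_pt (fun y => f y - g y) x.
Proof. apply continuity_pt_minus. Qed.
Lemma cpt_opp f x : continuity_pt f x -> continuity_pt (fun y => - f y) x.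
Proof. apply continuity_pt_opp. Qed.
Lemma cpt_const c x : continuity_pt (fun _ => c) x.
Proof. apply continuity_pt_const. intros a b; reflexivity. Qed.
Lemma cpt_id x : continuity_pt (fun y => y) x.
Proof. apply derivable_continuous_pt, derivable_pt_id. Qed.
Lemma cpt_comp (f g : R -> R) x : continuity_pt g x -> continuity_pt f (g x) -> continuity_pt (fun y => f (g y)) x.
Proof. intros; apply (continuity_pt_comp g f); auto. Qed.
Lemma cpt_inv f x : continuity_pt f x -> f x <> 0 -> continuity_pt (fun y => / f y) x.
Proof. intros; apply (continuity_pt_inv f); auto. Qed.
Lemma cpt_abs f x : continuity_pt f x -> continuity_pt (fun y => Rabs (f y)) x.
Proof. intros; apply cpt_comp; auto; apply Rcontinuity_abs. Qed.
Lemma cpt_sqrt f x : continuity_pt f x -> 0 <= f x -> continuity_pt (fun y => sqrt (f y)) x.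
Proof. intros; apply cpt_comp; auto; apply continuity_pt_sqrt; auto. Qed.
Lemma cpt_pow f n x : continuity_pt f x -> continuity_pt (fun y => f y ^ n) x.
Proof. intros; apply (cpt_comp (fun z => z ^ n) f); auto. apply derivable_continuous_pt, derivable_pt_pow. Qed.
Lemma cpt_div f g x : continuity_pt f x -> continuity_pt g x -> g x <> 0 -> continuity_pt (fun y => f y / g y) x.
Proof. intros; unfold Rdiv; apply cpt_mult; auto; apply cpt_inv; auto. Qed.


Lemma cpt_of_dl f x l : derivable_pt_lim f x l -> continuity_pt f x.
Proof. intros H; apply derivable_continuous_pt; exists l; exact H. Qed.
Lemma dl_mult f g x a b : derivable_pt_lim f x a -> derivable_pt_lim g x b ->
  derivable_pt_lim (fun y => f y * g y) x (a * g x + f x * b).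
Proof. apply derivable_pt_lim_mult. Qed.
Lemma dl_plus f g x a b : derivable_pt_lim f x a -> derivable_pt_lim g x b ->
  derivable_pt_lim (fun y => f y + g y) x (a + b).
Proof. apply derivable_pt_lim_plus. Qed.
Lemma dl_minus f g x a b : derivable_pt_lim f x a -> derivable_pt_lim g x b ->
  derivable_pt_lim (fun y => f y - g y) x (a - b).
Proof. apply derivable_pt_lim_minus. Qed.
Lemma dl_const c x : derivable_pt_lim (fun _ => c) x 0.
Proof. apply derivable_pt_lim_const. Qed.
Lemma dl_id x : derivable_pt_lim (fun y => y) x 1.
Proof. apply derivable_pt_lim_id. Qed.
Lemma dl_comp (f g : R -> R) x a b : derivable_pt_lim g x a -> derivable_pt_lim f (g x) b ->
  derivable_pt_lim (fun y => f (g y)) x (b * a).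
Proof. intros; apply (derivable_pt_lim_comp g f); auto. Qed.
Lemma dl_ext f g x l : (forall y, f y = g y) -> derivable_pt_lim f x l -> derivable_pt_lim g x l.
Proof. intros E H. replace g with f; auto. apply functional_extensionality; auto. Qed.
Lemma dl_eq f x l l' : l = l' -> derivable_pt_lim f x l -> derivable_pt_lim f x l'.
Proof. intros ->; auto. Qed.

Lemma c2_x f y x : continuous2 f -> continuity_pt (fun s => f s y) x.
Proof.
  intros Hf. apply cpt_of. intros eps He. destruct (Hf x y eps He) as [d [Hd H]].
  exists d; split; auto. intros x' Hx'. apply H; auto. rewrite Rminus_diag, Rabs_R0; lra.
Qed.
Lemma c2_y f x y : continuous2 f -> continuity_pt (fun s => f x s) y.
Proof.
  intros Hf. apply cpt_of. intros eps He. destruct (Hf x y eps He) as [d [Hd H]].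
  exists d; split; auto. intros y' Hy'. apply H; auto. rewrite Rminus_diag, Rabs_R0; lra.
Qed.

Lemma c2_plus f g : continuous2 f -> continuous2 g -> continuous2 (fun x y => f x y + g x y).
Proof.
  intros Hf Hg x y eps He.
  destruct (Hf x y (eps/2)) as [d1 [Hd1 H1]]; [lra|].
  destruct (Hg x y (eps/2)) as [d2 [Hd2 H2]]; [lra|].
  exists (Rmin d1 d2); split; [apply Rmin_pos; auto|].
  intros x' y' Hx Hy.
  assert (A1 := H1 x' y' (Rlt_le_trans _ _ _ Hx (Rmin_l _ _)) (Rlt_le_trans _ _ _ Hy (Rmin_l _ _))).
  assert (A2 := H2 x' y' (Rlt_le_trans _ _ _ Hx (Rmin_r _ _)) (Rlt_le_trans _ _ _ Hy (Rmin_r _ _))).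
  replace (f x' y' + g x' y' - (f x y + g x y)) with ((f x' y' - f x y) + (g x' y' - g x y)) by ring.
  eapply Rle_lt_trans; [apply Rabs_triang|]. lra.
Qed.

Lemma c2_comp (phi : R -> R) f : (forall z, continuity_pt phi z) -> continuous2 f ->
  continuous2 (fun x y => phi (f x y)).
Proof.
  intros Hp Hf x y eps He.
  destruct (cpt_to _ _ (Hp (f x y)) eps He) as [d1 [Hd1 H1]].
  destruct (Hf x y d1 Hd1) as [d2 [Hd2 H2]].
  exists d2; split; auto.
Qed.

Lemma c2_ext f g : (forall x y, f x y = g x y) -> continuous2 f -> continuous2 g.
Proof. intros E Hf x y eps He. destruct (Hf x y eps He) as [d [Hd H]]. exists d; split; auto.
  intros; rewrite <- !E; auto. Qed.

Lemma c2_mult f g : continuous2 f -> continuous2 g -> continuous2 (fun x y => f x y * g x y).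
Proof.
  intros Hf Hg.
  apply c2_ext with (f := fun x y => (fun z => /4 * z) ((fun z => z ^ 2) (f x y + g x y))
                                 + (fun z => -/4 * z) ((fun z => z ^ 2) ((fun z => -1 * z) (g x y) + f x y))).
  { intros; cbv beta. field. }
  assert (Hl : forall c z, continuity_pt (fun z => c * z) z).
  { intros. apply (cpt_of_dl _ _ (0 * z + c * 1)). apply dl_mult. apply dl_const. apply dl_id. }
  assert (Hs : forall z, continuity_pt (fun z => z ^ 2) z).
  { intros. apply derivable_continuous_pt, derivable_pt_pow. }
  apply c2_plus.
  - apply (c2_comp (fun z => /4*z) (fun x y => (f x y + g x y)^2)); auto.
    apply (c2_comp (fun z => z^2) (fun x y => f x y + g x y)); auto. apply c2_plus; auto.
  - apply (c2_comp (fun z => -/4*z) (fun x y => (-1 * g x y + f x y)^2)); auto.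
    apply (c2_comp (fun z => z^2) (fun x y => -1*g x y + f x y)); auto. apply c2_plus; auto.
    apply (c2_comp (fun z => -1*z) g); auto.
Qed.

Fixpoint minl (r : R -> R) (l : list R) : R :=
  match l with nil => 1 | z :: l' => Rmin (r z) (minl r l') end.

Lemma minl_pos r l : (forall z, 0 < r z) -> 0 < minl r l.
Proof. intros H; induction l; simpl; [lra| apply Rmin_pos; auto]. Qed.

Lemma minl_le r l z : In z l -> minl r l <= r z.
Proof.
  induction l as [|a l IH]; simpl; [tauto|]. intros [->|Hin].
  - apply Rmin_l.
  - eapply Rle_trans; [apply Rmin_r| auto].
Qed.

Lemma lebesgue (r : R -> R) a b : (forall z, 0 < r z) ->
  exists delta, 0 < delta /\ forall z, a <= z <= b -> exists z0, Rabs (z - z0) < r z0 /\ delta <= r z0.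
Proof.
  intros Hr.
  set (fam := mkfamily (fun _ => True) (fun z0 z => Rabs (z - z0) < r z0) (fun _ _ => I)).
  assert (Hc : covering_open_set (fun c => a <= c <= b) fam).
  { split.
    - intros z _. exists z. simpl. rewrite Rminus_diag, Rabs_R0. apply Hr.
    - intros z0 z Hz. simpl in Hz.
      assert (Hp : 0 < r z0 - Rabs (z - z0)) by lra.
      exists (mkposreal _ Hp). intros y Hy. unfold disc in Hy; simpl in *.
      replace (y - z0) with ((y - z) + (z - z0)) by ring.
      eapply Rle_lt_trans; [apply Rabs_triang|]. lra. }
  destruct (compact_P3 a b fam Hc) as [D [Hcov [l Hl]]].
  exists (minl r l); split; [apply minl_pos; auto|].
  intros z Hz. destruct (Hcov z Hz) as [z0 [H1 H2]]. exists z0. split; [exact H1|].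
  apply minl_le. apply Hl. split; [exact I| exact H2].
Qed.

Lemma tube f a b y0 eps : continuous2 f -> 0 < eps ->
  exists rho, 0 < rho /\ forall x y', a <= x <= b -> Rabs (y' - y0) < rho ->
    Rabs (f x y' - f x y0) < eps.
Proof.
  intros Hf He.
  assert (Hex : forall x, exists d, 0 < d /\ forall x' y', Rabs (x' - x) < d -> Rabs (y' - y0) < d ->
     Rabs (f x' y' - f x y0) < eps/2).
  { intros x. apply Hf. lra. }
  set (dl := fun x => proj1_sig (constructive_indefinite_description _ (Hex x))).
  assert (Hdl : forall x, 0 < dl x /\ forall x' y', Rabs (x' - x) < dl x -> Rabs (y' - y0) < dl x ->
     Rabs (f x' y' - f x y0) < eps/2).
  { intros x. unfold dl. destruct (constructive_indefinite_description _ (Hex x)); simpl; auto. }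
  destruct (lebesgue dl a b (fun z => proj1 (Hdl z))) as [d [Hd HL]].
  exists d; split; auto. intros x y' Hx Hy.
  destruct (HL x Hx) as [x0 [H1 H2]].
  destruct (Hdl x0) as [_ Hc].
  assert (A1 := Hc x y' H1 ltac:(lra)).
  assert (A2 := Hc x y0 H1 ltac:(rewrite Rminus_diag, Rabs_R0; lra)).
  replace (f x y' - f x y0) with ((f x y' - f x0 y0) - (f x y0 - f x0 y0)) by ring.
  eapply Rle_lt_trans; [apply Rabs_triang|]. rewrite Rabs_Ropp. lra.
Qed.

Lemma unif_y f a b c d eps : continuous2 f -> 0 < eps ->
  exists delta, 0 < delta /\ forall x y y', a <= x <= b -> c <= y <= d ->
    Rabs (y' - y) < delta -> Rabs (f x y' - f x y) < eps.
Proof.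
  intros Hf He.
  assert (Hex : forall y0, exists rho, 0 < rho /\ forall x y', a <= x <= b -> Rabs (y' - y0) < rho ->
    Rabs (f x y' - f x y0) < eps/2).
  { intros y0. apply tube; auto; lra. }
  set (rl := fun y => proj1_sig (constructive_indefinite_description _ (Hex y))).
  assert (Hrl : forall y0, 0 < rl y0 /\ forall x y', a <= x <= b -> Rabs (y' - y0) < rl y0 ->
    Rabs (f x y' - f x y0) < eps/2).
  { intros y0. unfold rl. destruct (constructive_indefinite_description _ (Hex y0)); simpl; auto. }
  destruct (lebesgue (fun y => rl y / 2) c d) as [dl [Hd HL]].
  { intros z. destruct (Hrl z). lra. }
  exists dl; split; auto. intros x y y' Hx Hy Hyy.
  destruct (HL y Hy) as [y0 [H1 H2]].
  destruct (Hrl y0) as [_ Hc].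
  assert (A1 : Rabs (y' - y0) < rl y0).
  { replace (y' - y0) with ((y' - y) + (y - y0)) by ring.
    eapply Rle_lt_trans; [apply Rabs_triang|]. lra. }
  assert (A2 : Rabs (y - y0) < rl y0) by lra.
  assert (B1 := Hc x y' Hx A1). assert (B2 := Hc x y Hx A2).
  replace (f x y' - f x y) with ((f x y' - f x y0) - (f x y - f x y0)) by ring.
  eapply Rle_lt_trans; [apply Rabs_triang|]. rewrite Rabs_Ropp. lra.
Qed.

Definition cont_on (f : R -> R) a b := forall x, a <= x <= b -> continuity_pt f x.

Lemma integral_ri f a b (pr : Riemann_integrable f a b) : integral f a b = RiemannInt pr.
Proof.
  unfold integral.
  destruct (epsilon_spec (inhabits 0) (fun I => exists pr : Riemann_integrable f a b, RiemannInt pr = I)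
     (ex_intro _ _ (ex_intro _ pr eq_refl))) as [pr' H].
  rewrite <- H. apply RiemannInt_P5.
Qed.

Lemma ri_cont f a b : a <= b -> cont_on f a b -> Riemann_integrable f a b.
Proof. intros; apply continuity_implies_RiemannInt; auto. Qed.

Lemma int_lin f g l a b : Riemann_integrable f a b -> Riemann_integrable g a b ->
  integral (fun x => f x + l * g x) a b = integral f a b + l * integral g a b.
Proof.
  intros pf pg. rewrite (integral_ri _ _ _ (RiemannInt_P10 l pf pg)), (integral_ri _ _ _ pf),
   (integral_ri _ _ _ pg). apply RiemannInt_P13.
Qed.

Lemma ri_lin f g l a b : Riemann_integrable f a b -> Riemann_integrable g a b ->
  Riemann_integrable (fun x => f x + l * g x) a b.
Proof. intros; apply RiemannInt_P10; auto. Qed.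

Lemma ri_ext f g a b : (forall x, f x = g x) -> Riemann_integrable f a b -> Riemann_integrable g a b.
Proof. intros E; apply Riemann_integrable_ext; auto. Qed.

Lemma int_fext f g a b : (forall x, f x = g x) -> integral f a b = integral g a b.
Proof. intros E. replace g with f; auto. apply functional_extensionality; auto. Qed.

Lemma int_le f g a b : a <= b -> Riemann_integrable f a b -> Riemann_integrable g a b ->
  (forall x, a < x < b -> f x <= g x) -> integral f a b <= integral g a b.
Proof.
  intros Hab pf pg H. rewrite (integral_ri _ _ _ pf), (integral_ri _ _ _ pg).
  apply RiemannInt_P19; auto.
Qed.

Lemma int_abs f a b : a <= b -> Riemann_integrable f a b ->
  Rabs (integral f a b) <= integral (fun x => Rabs (f x)) a b.
Proof.
  intros Hab pf. rewrite (integral_ri _ _ _ pf), (integral_ri _ _ _ (RiemannInt_P16 pf)).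
  apply RiemannInt_P17; auto.
Qed.

Lemma ri_abs f a b : Riemann_integrable f a b -> Riemann_integrable (fun x => Rabs (f x)) a b.
Proof. apply RiemannInt_P16. Qed.

Lemma ri_const c a b : Riemann_integrable (fun _ => c) a b.
Proof. apply (RiemannInt_P14 a b c). Qed.

Lemma int_const c a b : integral (fun _ => c) a b = c * (b - a).
Proof. rewrite (integral_ri _ _ _ (ri_const c a b)). apply RiemannInt_P15. Qed.

Lemma int_chasles f a b c : Riemann_integrable f a b -> Riemann_integrable f b c ->
  integral f a b + integral f b c = integral f a c.
Proof.
  intros p1 p2. rewrite (integral_ri _ _ _ p1), (integral_ri _ _ _ p2),
    (integral_ri _ _ _ (RiemannInt_P24 p1 p2)). apply RiemannInt_P26.
Qed.

Lemma int_ext_on f g a b : a <= b -> Riemann_integrable f a b -> (forall x, a <= x <= b -> f x = g x) ->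
  integral f a b = integral g a b.
Proof.
  intros Hab pf E. assert (pg : Riemann_integrable g a b).
  { refine (@Riemann_integrable_ext f g a b _ pf). intros x Hx. apply E.
    rewrite Rmin_left, Rmax_right in Hx; auto. }
  rewrite (integral_ri _ _ _ pf), (integral_ri _ _ _ pg). apply RiemannInt_P18; auto.
  intros; apply E; lra.
Qed.

Lemma ri_sub f a b c d : a <= c -> c <= d -> d <= b -> Riemann_integrable f a b -> Riemann_integrable f c d.
Proof.
  intros H1 H2 H3 pf. apply (RiemannInt_P23 (RiemannInt_P22 pf (conj (Rle_trans _ _ _ H1 H2) H3))). lra.
Qed.

Lemma ftc F f a b : a <= b -> (forall x, a <= x <= b -> derivable_pt_lim F x (f x)) -> cont_on f a b ->
  integral f a b = F b - F a.
Proof.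
  intros Hab HF Hc.
  set (P := primitive Hab (FTC_P1 Hab Hc)).
  assert (AP : antiderivative f P a b) by apply RiemannInt_P29.
  assert (AF : antiderivative f F a b).
  { split; auto. intros x Hx. exists (exist _ (f x) (HF x Hx)). reflexivity. }
  destruct (antiderivative_Ucte f F P a b AF AP) as [c Hc'].
  assert (pr := ri_cont f a b Hab Hc).
  rewrite (integral_ri _ _ _ pr), (RiemannInt_P20 Hab (FTC_P1 Hab Hc) pr).
  fold P. rewrite (Hc' b), (Hc' a); try lra.
Qed.

Lemma dl_loc f g x l : derivable_pt_lim g x l ->
  (exists d, 0 < d /\ forall y, Rabs (y - x) < d -> f y = g y) -> derivable_pt_lim f x l.
Proof.
  intros Hg [d [Hd E]] eps He. destruct (Hg eps He) as [d1 Hd1].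
  assert (Hp : 0 < Rmin d d1) by (apply Rmin_pos; auto; apply cond_pos).
  exists (mkposreal _ Hp). intros h Hh Hlt. simpl in Hlt.
  rewrite (E (x + h)), (E x).
  - apply Hd1; auto. eapply Rlt_le_trans; [exact Hlt| apply Rmin_r].
  - rewrite Rminus_diag, Rabs_R0; auto.
  - replace (x + h - x) with h by ring. eapply Rlt_le_trans; [exact Hlt| apply Rmin_l].
Qed.

Lemma dl_int_upper f a b x : a <= b -> cont_on f a b -> a < x < b ->
  derivable_pt_lim (fun y => integral f a y) x (f x).
Proof.
  intros Hab Hc Hx.
  apply dl_loc with (g := primitive Hab (FTC_P1 Hab Hc)).
  - apply RiemannInt_P27; auto.
  - exists (Rmin (x - a) (b - x)). split; [apply Rmin_pos; lra|].
    intros y Hy. assert (Ha : a <= y <= b).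
    { apply Rabs_def2 in Hy. destruct Hy. assert (Rmin (x - a) (b - x) <= x - a) by apply Rmin_l.
      assert (Rmin (x - a) (b - x) <= b - x) by apply Rmin_r. lra. }
    unfold primitive. destruct (Rle_dec a y); [|lra]. destruct (Rle_dec y b); [|lra].
    apply integral_ri.
Qed.

Lemma ri_scal f a b k : Riemann_integrable f a b -> Riemann_integrable (fun x => k * f x) a b.
Proof. apply Riemann_integrable_scal. Qed.

Lemma int_comb f g al be a b : Riemann_integrable f a b -> Riemann_integrable g a b ->
  integral (fun x => al * f x + be * g x) a b = al * integral f a b + be * integral g a b.
Proof.
  intros pf pg.
  rewrite (int_lin (fun x => al * f x) g be a b (ri_scal f a b al pf) pg). f_equal.
  rewrite (int_fext (fun x => al * f x) (fun x => (fun _ => 0) x + al * f x)) by (intros; ring).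
  rewrite (int_lin (fun _ => 0) f al a b (ri_const 0 a b) pf), int_const. ring.
Qed.

Lemma ri_comb f g al be a b : Riemann_integrable f a b -> Riemann_integrable g a b ->
  Riemann_integrable (fun x => al * f x + be * g x) a b.
Proof. intros pf pg. apply (ri_lin (fun x => al * f x) g be a b (ri_scal f a b al pf) pg). Qed.

Lemma dint K H a b t : a <= b -> continuous2 K -> continuous2 H ->
  (forall x s, derivable_pt_lim (fun s => K x s) s (H x s)) ->
  derivable_pt_lim (fun s => integral (fun x => K x s) a b) t (integral (fun x => H x t) a b).
Proof.
  intros Hab HK HH HD eps He.
  set (e' := eps / (b - a + 1)).
  assert (He' : 0 < e') by (unfold e'; apply Rdiv_lt_0_compat; lra).
  destruct (unif_y H a b t t e' HH He') as [d0 [Hd0 HU]].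
  assert (Hp : 0 < Rmin 1 d0) by (apply Rmin_pos; lra).
  exists (mkposreal _ Hp). intros h Hh Hlt; simpl in Hlt.
  assert (pK : forall s, Riemann_integrable (fun x => K x s) a b).
  { intros s. apply ri_cont; auto. intros x _. apply c2_x; auto. }
  assert (pH : forall s, Riemann_integrable (fun x => H x s) a b).
  { intros s. apply ri_cont; auto. intros x _. apply c2_x; auto. }
  set (Dif := fun x => 1 * K x (t + h) + (-1) * K x t).
  assert (pDif : Riemann_integrable Dif a b) by (apply ri_comb; auto).
  assert (EDif : integral Dif a b = integral (fun x => K x (t+h)) a b - integral (fun x => K x t) a b).
  { unfold Dif. rewrite int_comb; auto. ring. }
  set (D := fun x => (/ h) * Dif x + (-1) * H x t).
  assert (pD : Riemann_integrable D a b) by (apply ri_comb; auto).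
  assert (ED : integral D a b = (integral (fun x => K x (t+h)) a b - integral (fun x => K x t) a b) / h
                - integral (fun x => H x t) a b).
  { unfold D. rewrite int_comb; auto. rewrite EDif. unfold Rdiv. ring. }
  rewrite <- ED.
  assert (Hpt : forall x, a < x < b -> Rabs (D x) <= e').
  { intros x Hx.
    assert (Hx' : a <= x <= b) by lra.
    destruct (Rlt_or_le 0 h) as [Hpos|Hneg].
    - destruct (MVT_cor2 (fun s => K x s) (fun s => H x s) t (t + h)) as [c [Ec Hc]]; [lra| intros; apply HD|].
      assert (D x = H x c - H x t).
      { unfold D, Dif. replace (K x (t+h)) with (K x t + H x c * (t + h - t)) by lra. field; auto. }
      rewrite H0. left. apply HU; auto; try lra.
      assert (Rmin 1 d0 <= d0) by apply Rmin_r.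
      rewrite Rabs_right; [|lra]. apply Rabs_def2 in Hlt. lra.
    - assert (Hneg' : h < 0) by lra.
      destruct (MVT_cor2 (fun s => K x s) (fun s => H x s) (t + h) t) as [c [Ec Hc]]; [lra| intros; apply HD|].
      assert (D x = H x c - H x t).
      { unfold D, Dif. replace (K x (t+h)) with (K x t - H x c * (t - (t + h))) by lra. field; auto. }
      rewrite H0. left. apply HU; auto; try lra.
      assert (Rmin 1 d0 <= d0) by apply Rmin_r.
      rewrite Rabs_left; [|lra]. apply Rabs_def2 in Hlt. lra. }
  eapply Rle_lt_trans; [apply int_abs; auto|].
  eapply Rle_lt_trans.
  { apply (int_le (fun x => Rabs (D x)) (fun _ => e')); auto. apply ri_abs; auto. apply ri_const. }
  rewrite int_const. unfold e'.
  apply Rlt_le_trans with (eps / (b - a + 1) * (b - a + 1)); [|right; field; lra].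
  apply Rmult_lt_compat_l; [apply Rdiv_lt_0_compat; lra| lra].
Qed.

Lemma schwarz (u ux ut uxt : R -> R -> R) :
  continuous2 ux -> continuous2 uxt ->
  (forall x t, derivable_pt_lim (fun s => u s t) x (ux x t)) ->
  (forall x t, derivable_pt_lim (fun s => u x s) t (ut x t)) ->
  (forall x s, derivable_pt_lim (fun s => ux x s) s (uxt x s)) ->
  forall x t, 0 <= x <= 1 -> derivable_pt_lim (fun y => ut y t) x (uxt x t).
Proof.
  intros Cux Cuxt Hux Hut Huxt x t Hx.
  assert (E : forall y, -1 <= y -> ut y t - ut (-1) t = integral (fun z => uxt z t) (-1) y).
  { intros y Hy.
    assert (Es : forall s, u y s - u (-1) s = integral (fun z => ux z s) (-1) y).
    { intros s. symmetry. apply (ftc (fun z => u z s)); auto.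
      intros z _. apply c2_x; auto. }
    apply (uniqueness_limite (fun s => u y s - u (-1) s) t).
    - apply dl_minus; auto.
    - apply (dl_ext (fun s => integral (fun z => ux z s) (-1) y)).
      { intros; rewrite Es; auto. }
      apply dint; auto. }
  apply dl_loc with (g := fun y => ut (-1) t + integral (fun z => uxt z t) (-1) y).
  - apply dl_eq with (0 + uxt x t); [ring|]. apply dl_plus; [apply dl_const|].
    apply (dl_int_upper (fun z => uxt z t) (-1) 2); try lra. intros z _. apply c2_x; auto.
  - exists 1; split; [lra|]. intros y Hy. apply Rabs_def2 in Hy. rewrite <- E; [ring| lra].
Qed.

Lemma main_deriv (ux uxx ut uxt : R -> R -> R) (Phi Phi1 Phi2 : R -> R) t :
  continuous2 ux -> continuous2 uxx -> continuous2 ut -> continuous2 uxt ->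
  (forall x s, derivable_pt_lim (fun s => ux x s) s (uxt x s)) ->
  (forall x s, derivable_pt_lim (fun y => ux y s) x (uxx x s)) ->
  (forall x, 0 <= x <= 1 -> derivable_pt_lim (fun y => ut y t) x (uxt x t)) ->
  ux 0 t = ux 1 t -> ut 0 t = ut 1 t ->
  (forall z, derivable_pt_lim Phi z (Phi1 z)) ->
  (forall z, derivable_pt_lim Phi1 z (Phi2 z)) ->
  (forall z, continuity_pt Phi2 z) ->
  derivable_pt_lim (fun s => integral (fun x => Phi (ux x s)) 0 1) t
     (- integral (fun x => Phi2 (ux x t) * uxx x t * ut x t) 0 1).
Proof.
  intros Cux Cuxx Cut Cuxt Huxt Huxx Hw E0 Ew D0 D1 C2.
  assert (CP : forall z, continuity_pt Phi z) by (intros; eapply cpt_of_dl; eauto).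
  assert (CP1 : forall z, continuity_pt Phi1 z) by (intros; eapply cpt_of_dl; eauto).
  eapply dl_eq; [| apply (dint (fun x s => Phi (ux x s)) (fun x s => Phi1 (ux x s) * uxt x s) 0 1 t)].
  - set (J := fun x => Phi2 (ux x t) * uxx x t * ut x t).
    set (L := fun x => Phi1 (ux x t) * uxt x t).
    assert (CJ : cont_on J 0 1).
    { intros x _. unfold J. apply cpt_mult; [apply cpt_mult|]; try apply c2_x; auto.
      apply cpt_comp; [apply c2_x; auto| apply C2]. }
    assert (CL : cont_on L 0 1).
    { intros x _. unfold L. apply cpt_mult; try apply c2_x; auto.
      apply cpt_comp; [apply c2_x; auto| apply CP1]. }
    assert (pJ := ri_cont J 0 1 ltac:(lra) CJ).
    assert (pL := ri_cont L 0 1 ltac:(lra) CL).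
    assert (F : integral (fun x => 1 * J x + 1 * L x) 0 1 = 0).
    { rewrite (ftc (fun x => Phi1 (ux x t) * ut x t)); try lra.
      - rewrite E0, Ew. ring.
      - intros x Hx. eapply dl_eq; [| apply dl_mult; [apply (dl_comp Phi1 (fun y => ux y t)); [apply Huxx| apply D1]| apply Hw; auto]].
        unfold J, L. ring.
      - intros x Hx. apply cpt_plus; apply cpt_mult; first [apply cpt_const | apply CJ; auto | apply CL; auto]. }
    rewrite int_comb in F; auto. fold L. lra.
  - lra.
  - apply (c2_comp Phi ux); auto.
  - apply c2_mult; auto. apply (c2_comp Phi1 ux); auto.
  - intros x s. apply (dl_comp Phi (fun s => ux x s)); auto.
Qed.

Lemma sq_facts p : 0 < sqrt (1 + p^2) /\ sqrt (1 + p^2) ^ 2 = 1 + p^2 /\ 1 <= sqrt (1 + p^2).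
Proof.
  assert (H0 : 0 < 1 + p^2) by nra.
  split; [apply sqrt_lt_R0; auto|]. split.
  - rewrite pow2_sqrt; lra.
  - replace 1 with (sqrt 1) at 1 by apply sqrt_1. apply sqrt_le_1_alt. assert (0 <= p^2) by (apply pow2_ge_0). lra.
Qed.

Lemma abs_sq g M : Rabs g <= M -> g * g <= M * M /\ 0 <= M.
Proof.
  intros H. assert (0 <= Rabs g) by apply Rabs_pos. split; [|lra].
  replace (g * g) with (Rabs g * Rabs g). nra.
  rewrite <- Rabs_mult. apply Rabs_right. nra.
Qed.

Lemma core12 q g M s : Rabs g <= M -> 0 < s -> - (q^2 + g*q*s^3) <= M^2/4 * s^6.
Proof.
  intros Hg Hs. destruct (abs_sq g M Hg) as [H1 H2].
  assert (0 <= (q + g*s^3/2)^2) by apply pow2_ge_0.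
  assert (0 <= (M*M - g*g) * s^6) by (apply Rmult_le_pos; [lra| apply pow_le; lra]).
  nra.
Qed.

Lemma pw1 p q g M : Rabs g <= M ->
  -1 * (/ sqrt (1 + p^2) ^ 3 * q * (q / (1 + p^2) + g * sqrt (1 + p^2))) + 0 * 0
    <= M^2/4 * sqrt (1 + p^2).
Proof.
  intros Hg. destruct (sq_facts p) as [Hs [Hs2 Hs1]].
  set (s := sqrt (1 + p^2)) in *. rewrite <- Hs2.
  apply Rmult_le_reg_r with (s^5); [apply pow_lt; auto|].
  replace ((-1 * (/ s ^ 3 * q * (q / s^2 + g * s)) + 0 * 0) * s ^ 5) with (- (q^2 + g*q*s^3)) by (field; lra).
  replace (M ^ 2 / 4 * s * s ^ 5) with (M^2/4 * s^6) by ring.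
  apply core12; auto.
Qed.

Lemma pw2 p q g M : Rabs g <= M ->
  -1 * (/ (1 + p^2) * q * (q / (1 + p^2) + g * sqrt (1 + p^2))) + 0 * 0
    <= M^2/4 * (1 + p^2).
Proof.
  intros Hg. destruct (sq_facts p) as [Hs [Hs2 Hs1]].
  set (s := sqrt (1 + p^2)) in *. rewrite <- Hs2.
  apply Rmult_le_reg_r with (s^4); [apply pow_lt; auto|].
  replace ((-1 * (/ s^2 * q * (q / s^2 + g * s)) + 0 * 0) * s ^ 4) with (- (q^2 + g*q*s^3)) by (field; lra).
  replace (M ^ 2 / 4 * s^2 * s ^ 4) with (M^2/4 * s^6) by ring.
  apply core12; auto.
Qed.

Lemma pw3 p q g M : Rabs g <= M ->
  -1 * ((3 * sqrt (1 + p^2) + 3 * p * (p / sqrt (1 + p^2))) * q * (q / (1 + p^2) + g * sqrt (1 + p^2)))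
    <= -3/2 * (q^2 / sqrt (1 + p^2)) + 6 * M^2 * sqrt (1 + p^2) ^ 5.
Proof.
  intros Hg. destruct (sq_facts p) as [Hs [Hs2 Hs1]]. destruct (abs_sq g M Hg) as [G1 G2].
  set (s := sqrt (1 + p^2)) in *.
  assert (Hp2 : p^2 = s^2 - 1) by lra. rewrite <- Hs2.
  apply Rmult_le_reg_r with (s^3); [apply pow_lt; auto|].
  replace (-1 * ((3 * s + 3 * p * (p / s)) * q * (q / s^2 + g * s)) * s^3)
     with (-3 * (s^2 + p^2) * (q^2 + g * q * s^3)) by (field; lra).
  replace ((-3/2 * (q^2 / s) + 6 * M^2 * s^5) * s^3) with (-3/2 * q^2 * s^2 + 6 * M^2 * s^8) by (field; lra).
  rewrite Hp2.
  set (k := 2 * s^2 - 1).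
  assert (Hk1 : s^2 <= k) by (unfold k; nra).
  assert (Hk2 : k <= 2 * s^2) by (unfold k; lra).
  assert (Hk0 : 0 <= k) by nra.
  assert (A1 : 0 <= 3/2 * q^2 + 3 * k * g * q * s + 6 * M^2 * s^6).
  { assert (B1 : - (k * Rabs g * Rabs q * s) <= k * g * q * s).
    { assert (Rabs (k * g * q * s) = k * Rabs g * Rabs q * s).
      { rewrite !Rabs_mult, (Rabs_right k), (Rabs_right s); lra. }
      rewrite <- H. apply Ropp_le_cancel. rewrite Ropp_involutive.
      rewrite <- Rabs_Ropp. apply Rle_abs. }
    assert (B2 : k * Rabs g * Rabs q * s <= 2 * s^2 * M * Rabs q * s).
    { assert (0 <= Rabs q) by apply Rabs_pos. assert (0 <= Rabs g) by apply Rabs_pos.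
      apply Rmult_le_compat_r; [lra|]. apply Rmult_le_compat_r; [lra|].
      apply Rmult_le_compat; lra. }
    assert (B3 : 0 <= 3/2 * (Rabs q - 2 * M * s^3)^2) by (apply Rmult_le_pos; [lra| apply pow2_ge_0]).
    assert (B4 : q^2 = Rabs q ^ 2) by (rewrite RPow_abs; rewrite Rabs_right; [auto|apply Rle_ge, pow2_ge_0]).
    nra. }
  assert (A2 : 0 <= s^2 * (3/2 * q^2 + 3 * k * g * q * s + 6 * M^2 * s^6)) by (apply Rmult_le_pos; nra).
  assert (A3 : 3 * k * q^2 - 3/2 * q^2 * s^2 >= 3/2 * s^2 * q^2) by nra.
  replace (-3 * (s^2 + (s^2 - 1)) * (q^2 + g * q * s^3)) with (-(3 * k * q^2) - 3 * k * g * q * s^3) by (unfold k; ring).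
  nra.
Qed.

Lemma dl_sq z : derivable_pt_lim (fun z => 1 + z^2) z (2 * z).
Proof.
  apply dl_eq with (0 + INR 2 * z ^ (2 - 1)); [simpl; ring|].
  apply dl_plus; [apply dl_const| apply derivable_pt_lim_pow].
Qed.

Lemma dS z : derivable_pt_lim (fun z => sqrt (1 + z^2)) z (z / sqrt (1 + z^2)).
Proof.
  destruct (sq_facts z) as [Hs [Hs2 Hs1]].
  apply dl_eq with (/ (2 * sqrt (1 + z^2)) * (2 * z)); [field; lra|].
  apply (dl_comp sqrt (fun z => 1 + z^2)); [apply dl_sq|].
  apply derivable_pt_lim_sqrt. nra.
Qed.

Lemma cS z : continuity_pt (fun z => sqrt (1 + z^2)) z.
Proof. eapply cpt_of_dl; apply dS. Qed.

Lemma dPa1 z : derivable_pt_lim (fun z => z / sqrt (1 + z^2)) z (/ sqrt (1 + z^2) ^ 3).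
Proof.
  destruct (sq_facts z) as [Hs [Hs2 Hs1]].
  eapply dl_eq; [| apply (derivable_pt_lim_div (fun z => z) (fun z => sqrt (1 + z^2))); [apply dl_id| apply dS| lra]].
  unfold Rsqr. set (s := sqrt (1 + z^2)) in *. replace (1 + z^2) with (s^2) by lra. 
  field_simplify; try lra. replace (z^2) with (s^2 - 1) by lra. field; lra.
Qed.

Lemma cPa2 z : continuity_pt (fun z => / sqrt (1 + z^2) ^ 3) z.
Proof.
  destruct (sq_facts z) as [Hs [Hs2 Hs1]].
  apply (cpt_inv (fun z => sqrt (1 + z^2) ^ 3)). apply cpt_pow, cS.
  apply pow_nonzero. lra.
Qed.

Lemma dFat z : derivable_pt_lim Fat z (atan z).
Proof.
  destruct (sq_facts z) as [Hs [Hs2 Hs1]].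
  unfold Fat.
  eapply dl_eq; [| apply dl_minus; [apply dl_mult; [apply dl_id| apply derivable_pt_lim_atan]|
     apply (dl_comp ln (fun z => sqrt (1 + z^2))); [apply dS| apply derivable_pt_lim_ln; lra]]].
  set (s := sqrt (1 + z^2)) in *. replace (1 + z^2) with (s^2) by lra. field. lra.
Qed.

Lemma cPb2 z : continuity_pt (fun z => / (1 + z^2)) z.
Proof.
  apply (cpt_inv (fun z => 1 + z^2)). eapply cpt_of_dl; apply dl_sq.
  assert (0 <= z^2) by apply pow2_ge_0. lra.
Qed.

Lemma dPc z : derivable_pt_lim (fun z => (1 + z^2) * sqrt (1 + z^2)) z (3 * z * sqrt (1 + z^2)).
Proof.
  destruct (sq_facts z) as [Hs [Hs2 Hs1]].
  eapply dl_eq; [| apply dl_mult; [apply dl_sq| apply dS]].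
  set (s := sqrt (1 + z^2)) in *. replace (1 + z^2) with (s^2) by lra. cbv beta. replace (1 + z^2) with (s^2) by lra. field. lra.
Qed.

Lemma dPc1 z : derivable_pt_lim (fun z => 3 * z * sqrt (1 + z^2)) z
   (3 * sqrt (1 + z^2) + 3 * z * (z / sqrt (1 + z^2))).
Proof.
  eapply dl_eq; [| apply dl_mult; [apply (dl_mult (fun _ => 3) (fun z => z)); [apply dl_const| apply dl_id]| apply dS]].
  cbv beta. ring.
Qed.

Lemma cPc2 z : continuity_pt (fun z => 3 * sqrt (1 + z^2) + 3 * z * (z / sqrt (1 + z^2))) z.
Proof.
  destruct (sq_facts z) as [Hs [Hs2 Hs1]].
  apply cpt_plus; apply cpt_mult; try apply cpt_const; try apply cS.
  apply cpt_mult; [apply cpt_const| apply cpt_id].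
  apply cpt_div; [apply cpt_id| apply cS| lra].
Qed.

Lemma rp a : Rpower (1 + a^2) (3/2) = (1 + a^2) * sqrt (1 + a^2).
Proof.
  assert (H : 0 < 1 + a^2) by (assert (0 <= a^2) by apply pow2_ge_0; lra).
  replace (3/2) with (1 + /2) by field. rewrite Rpower_plus, Rpower_1, Rpower_sqrt; auto.
Qed.

Lemma int_scal f k a b : Riemann_integrable f a b ->
  integral (fun x => k * f x) a b = k * integral f a b.
Proof.
  intros pf. rewrite (int_fext (fun x => k * f x) (fun x => k * f x + 0 * f x)) by (intros; ring).
  rewrite int_comb; auto. ring.
Qed.

Lemma neg_int_le J B : cont_on J 0 1 -> cont_on B 0 1 -> (forall x, 0 < x < 1 -> - J x <= B x) ->
  - integral J 0 1 <= integral B 0 1.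
Proof.
  intros CJ CB H. assert (pJ := ri_cont J 0 1 ltac:(lra) CJ). assert (pB := ri_cont B 0 1 ltac:(lra) CB).
  replace (- integral J 0 1) with (integral (fun x => -1 * J x + 0 * J x) 0 1) by (rewrite int_comb; auto; ring).
  apply int_le; auto; try lra. apply ri_comb; auto. intros x Hx. specialize (H x Hx). lra.
Qed.

Lemma int_nonneg f a b : a <= b -> cont_on f a b -> (forall x, a < x < b -> 0 <= f x) -> 0 <= integral f a b.
Proof.
  intros Hab Cf H. replace 0 with (integral (fun _ => 0) a b) by (rewrite int_const; ring).
  apply int_le; auto. apply ri_const. apply ri_cont; auto.
Qed.

Lemma sub_int_le f a b : cont_on f 0 1 -> 0 <= a -> a <= b -> b <= 1 ->
  Rabs (integral f a b) <= integral (fun x => Rabs (f x)) 0 1.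
Proof.
  intros Cf H1 H2 H3.
  assert (pf := ri_cont f 0 1 ltac:(lra) Cf).
  assert (pa := ri_abs f 0 1 pf).
  eapply Rle_trans; [apply int_abs; auto; apply (ri_sub f 0 1); auto; lra|].
  assert (Cabs : cont_on (fun x => Rabs (f x)) 0 1) by (intros x Hx; apply cpt_abs; auto).
  rewrite <- (int_chasles _ 0 a 1); [| apply (ri_sub _ 0 1); auto; lra| apply (ri_sub _ 0 1); auto; lra].
  rewrite <- (int_chasles _ a b 1); [| apply (ri_sub _ 0 1); auto; lra| apply (ri_sub _ 0 1); auto; lra].
  assert (0 <= integral (fun x => Rabs (f x)) 0 a).
  { apply int_nonneg; auto. intros x Hx; apply Cabs; lra. intros; apply Rabs_pos. }
  assert (0 <= integral (fun x => Rabs (f x)) b 1).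
  { apply int_nonneg; auto. intros x Hx; apply Cabs; lra. intros; apply Rabs_pos. }
  lra.
Qed.

Lemma const_deriv (f : R -> R) T t l : 0 < T -> 0 <= t <= T -> (forall s, 0 <= s <= T -> f s = f 0) ->
  derivable_pt_lim f t l -> l = 0.
Proof.
  intros HT Ht Hc Hd. destruct (Req_dec l 0) as [|Hne]; auto. exfalso.
  assert (Hl : 0 < Rabs l) by (apply Rabs_pos_lt; auto).
  destruct (Hd _ Hl) as [d Hdd].
  set (h0 := Rmin (d/2) (T/2)).
  assert (Hh0 : 0 < h0) by (apply Rmin_pos; [apply Rdiv_lt_0_compat; [apply cond_pos|]|]; lra).
  assert (Hh0d : h0 < d) by (assert (h0 <= d/2) by apply Rmin_l; assert (0 < d) by apply cond_pos; lra).
  assert (Hh0T : h0 <= T/2) by apply Rmin_r.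
  destruct (Rle_or_lt (t + h0) T) as [Hin|Hout].
  - assert (A := Hdd h0 ltac:(lra) ltac:(rewrite Rabs_right; lra)).
    rewrite (Hc (t + h0)), (Hc t) in A; try lra.
    replace ((f 0 - f 0) / h0 - l) with (- l) in A by (field; lra). rewrite Rabs_Ropp in A. lra.
  - assert (A := Hdd (- h0) ltac:(lra) ltac:(rewrite Rabs_Ropp, Rabs_right; lra)).
    rewrite (Hc (t + - h0)), (Hc t) in A; try lra.
    replace ((f 0 - f 0) / - h0 - l) with (- l) in A by (field; lra). rewrite Rabs_Ropp in A. lra.
Qed.

Lemma pwA p q e : 0 < e ->
  Rabs (2 * p * q) <= e * (q^2 / sqrt (1 + p^2)) + / e * ((1 + p^2) * sqrt (1 + p^2)).
Proof.
  intros He. destruct (sq_facts p) as [Hs [Hs2 Hs1]].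
  assert (Hp : Rabs p <= sqrt (1 + p^2)).
  { rewrite <- sqrt_Rsqr_abs. apply sqrt_le_1_alt. unfold Rsqr. simpl. nra. }
  set (s := sqrt (1 + p^2)) in *. rewrite <- Hs2.
  assert (Hq0 : 0 <= Rabs q) by apply Rabs_pos.
  assert (B4 : q^2 = Rabs q ^ 2) by (rewrite RPow_abs; rewrite Rabs_right; [auto|apply Rle_ge, pow2_ge_0]).
  rewrite !Rabs_mult, (Rabs_right 2) by lra.
  apply Rle_trans with (2 * s * Rabs q).
  { apply Rmult_le_compat_r; auto. lra. }
  apply Rmult_le_reg_r with (e * s); [nra|].
  replace ((e * (q ^ 2 / s) + / e * (s ^ 2 * s)) * (e * s)) with (e^2 * q^2 + s^4) by (field; lra).
  rewrite B4. assert (0 <= (e * Rabs q - s^2)^2) by apply pow2_ge_0. nra.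
Qed.

Theorem lemma2p15 :
  forall M : R, 0 <= M ->
  exists C : R, 0 < C /\
  forall (g : R -> R -> R) (T : R) (u ux uxx ut : R -> R -> R),
    smooth2 g -> bounded_derivs2 g -> periodic2 g ->
    (forall x y, Rabs (g x y) <= M) ->
    0 < T ->
    smooth2 u ->
    (forall x t, derivable_pt_lim (fun s => u s t) x (ux x t)) ->
    (forall x t, derivable_pt_lim (fun s => ux s t) x (uxx x t)) ->
    (forall x t, derivable_pt_lim (fun s => u x s) t (ut x t)) ->
    (forall x t, 0 <= x <= 1 -> 0 <= t <= T ->
       ut x t = uxx x t / (1 + ux x t ^ 2)
                + g x (u x t) * sqrt (1 + ux x t ^ 2)) ->
    (forall t, 0 <= t <= T ->
       u 0 t - u 0 0 = u 1 t - u 1 0 /\ ux 0 t = ux 1 t) ->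
    forall t, 0 <= t <= T ->
      (exists d, derivable_pt_lim
          (fun s => integral (fun x => sqrt (1 + ux x s ^ 2)) 0 1) t d /\
        d <= C * integral (fun x => sqrt (1 + ux x t ^ 2)) 0 1) /\
      (exists d, derivable_pt_lim
          (fun s => integral (fun x => Fat (ux x s)) 0 1) t d /\
        d <= C * integral (fun x => 1 + ux x t ^ 2) 0 1) /\
      (exists d, derivable_pt_lim
          (fun s => integral (fun x => Rpower (1 + ux x s ^ 2) (3 / 2)) 0 1) t d /\
        d <= C + C * (integral (fun x => Rpower (1 + ux x t ^ 2) (3 / 2)) 0 1) ^ 3).
Proof.
  intros M HM.
  exists (1 + 13 * M^2 + 24 * M^4). split; [nra|].
  intros g T u ux uxx ut Sg Bg Pg Hg HT Su Hux Huxx Hut Hpde Hbc t Ht.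
  assert (ipux : is_pderiv u ux) by (apply (pd_x u u ux (pd_self u)); exact Hux).
  destruct (Su ux ipux) as [Cux [_ [uxt Huxt]]].
  assert (ipuxt : is_pderiv u uxt) by (apply (pd_y u ux uxt ipux); exact Huxt).
  assert (Cuxt := proj1 (Su uxt ipuxt)).
  assert (ipuxx : is_pderiv u uxx) by (apply (pd_x u ux uxx ipux); exact Huxx).
  assert (Cuxx := proj1 (Su uxx ipuxx)).
  assert (iput : is_pderiv u ut) by (apply (pd_y u u ut (pd_self u)); exact Hut).
  assert (Cut := proj1 (Su ut iput)).
  assert (Hw := schwarz u ux ut uxt Cux Cuxt Hux Hut Huxt).
  assert (E0 : ux 0 t = ux 1 t) by (apply Hbc; auto).
  assert (Ew : ut 0 t = ut 1 t).
  { assert (l0 := const_deriv (fun s => u 1 s - u 0 s) T t (ut 1 t - ut 0 t) HT Ht).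
    enough (ut 1 t - ut 0 t = 0) by lra. apply l0.
    - intros s Hs. destruct (Hbc s Hs). lra.
    - apply dl_minus; auto. }
  assert (Hw' : forall x, 0 <= x <= 1 -> derivable_pt_lim (fun y => ut y t) x (uxt x t)) by (intros; apply Hw; auto).
  assert (cp : forall x, continuity_pt (fun y => ux y t) x) by (intros; apply c2_x; auto).
  assert (cq : forall x, continuity_pt (fun y => uxx y t) x) by (intros; apply c2_x; auto).
  assert (cw : forall x, continuity_pt (fun y => ut y t) x) by (intros; apply c2_x; auto).
  assert (cs : forall x, continuity_pt (fun y => sqrt (1 + ux y t ^ 2)) x).
  { intros. apply (cpt_comp (fun z => sqrt (1 + z^2)) (fun y => ux y t)); auto. apply cS. }
  assert (cv : forall x, continuity_pt (fun y => 1 + ux y t ^ 2) x).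
  { intros. apply (cpt_comp (fun z => 1 + z^2) (fun y => ux y t)); auto. eapply cpt_of_dl; apply dl_sq. }
  assert (spos : forall x, 0 < sqrt (1 + ux x t ^ 2)) by (intros; apply sq_facts).
  assert (vpos : forall x, 0 < 1 + ux x t ^ 2) by (intros; assert (0 <= ux x t ^ 2) by apply pow2_ge_0; lra).
  Ltac nz := first [apply Rgt_not_eq; unfold Rgt; solve [auto] | apply pow_nonzero, Rgt_not_eq; unfold Rgt; solve [auto]].
  Ltac cc := repeat (first [ solve [auto] | apply cpt_const | apply cpt_mult | apply cpt_plus
      | apply cpt_abs | apply cpt_div; [ | | nz] | apply cpt_inv; [ | nz] | apply cpt_pow]).
  assert (HC0 : 0 <= M^2) by nra.
  split; [| split].
  - exists (- integral (fun x => (fun z => / sqrt (1 + z^2) ^ 3) (ux x t) * uxx x t * ut x t) 0 1).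
    split.
    + apply (main_deriv ux uxx ut uxt (fun z => sqrt (1 + z^2)) (fun z => z / sqrt (1 + z^2))
         (fun z => / sqrt (1 + z^2) ^ 3) t); auto. apply dS. apply dPa1. apply cPa2.
    + eapply Rle_trans; [apply (neg_int_le _ (fun x => M^2/4 * sqrt (1 + ux x t ^ 2)))|].
      * intros x _; cbv beta; cc.
      * intros x _; cbv beta; cc.
      * intros x Hx. cbv beta. rewrite (Hpde x t); try lra.
        pose proof (pw1 (ux x t) (uxx x t) (g x (u x t)) M (Hg _ _)). lra.
      * rewrite int_scal; [| apply ri_cont; [lra| intros x _; auto]].
        apply Rmult_le_compat_r; [| nra].
        apply int_nonneg; [lra| intros x _; auto| intros; left; auto].
  - exists (- integral (fun x => (fun z => / (1 + z^2)) (ux x t) * uxx x t * ut x t) 0 1).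
    split.
    + apply (main_deriv ux uxx ut uxt Fat atan (fun z => / (1 + z^2)) t); auto.
      apply dFat. apply derivable_pt_lim_atan. apply cPb2.
    + eapply Rle_trans; [apply (neg_int_le _ (fun x => M^2/4 * (1 + ux x t ^ 2)))|].
      * intros x _; cbv beta; cc.
      * intros x _; cbv beta; cc.
      * intros x Hx. cbv beta. rewrite (Hpde x t); try lra.
        pose proof (pw2 (ux x t) (uxx x t) (g x (u x t)) M (Hg _ _)). lra.
      * rewrite int_scal; [| apply ri_cont; [lra| intros x _; auto]].
        apply Rmult_le_compat_r; [| nra].
        apply int_nonneg; [lra| intros x _; auto| intros; left; auto].
  - rewrite (int_fext (fun x => Rpower (1 + ux x t ^ 2) (3/2))
                      (fun x => (1 + ux x t ^ 2) * sqrt (1 + ux x t ^ 2))) by (intros; apply rp).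
    replace (fun s => integral (fun x => Rpower (1 + ux x s ^ 2) (3 / 2)) 0 1)
      with (fun s => integral (fun x => (fun z => (1 + z^2) * sqrt (1 + z^2)) (ux x s)) 0 1).
    2:{ apply functional_extensionality; intros s. apply int_fext. intros; cbv beta; symmetry; apply rp. }
    exists (- integral (fun x => (fun z => 3 * sqrt (1 + z^2) + 3 * z * (z / sqrt (1 + z^2))) (ux x t)
                                 * uxx x t * ut x t) 0 1).
    split.
    + apply (main_deriv ux uxx ut uxt (fun z => (1 + z^2) * sqrt (1 + z^2)) (fun z => 3 * z * sqrt (1 + z^2))
         (fun z => 3 * sqrt (1 + z^2) + 3 * z * (z / sqrt (1 + z^2))) t); auto.
      apply dPc. apply dPc1. apply cPc2.
    + set (E := integral (fun x => (1 + ux x t ^ 2) * sqrt (1 + ux x t ^ 2)) 0 1).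
      set (G := integral (fun x => uxx x t ^ 2 / sqrt (1 + ux x t ^ 2)) 0 1).
      set (A := integral (fun x => Rabs (2 * ux x t * uxx x t)) 0 1).
      set (S5 := integral (fun x => sqrt (1 + ux x t ^ 2) ^ 5) 0 1).
      assert (cE : cont_on (fun x => (1 + ux x t ^ 2) * sqrt (1 + ux x t ^ 2)) 0 1) by (intros x _; cc).
      assert (cG : cont_on (fun x => uxx x t ^ 2 / sqrt (1 + ux x t ^ 2)) 0 1) by (intros x _; cc).
      assert (cA : cont_on (fun x => 2 * ux x t * uxx x t) 0 1) by (intros x _; cc).
      assert (cS5 : cont_on (fun x => sqrt (1 + ux x t ^ 2) ^ 5) 0 1) by (intros x _; cc).
      assert (pE := ri_cont _ 0 1 ltac:(lra) cE).
      assert (pG := ri_cont _ 0 1 ltac:(lra) cG).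
      assert (pA := ri_abs _ 0 1 (ri_cont _ 0 1 ltac:(lra) cA)).
      assert (pS5 := ri_cont _ 0 1 ltac:(lra) cS5).
      assert (Hd3 : - integral (fun x => (fun z => 3 * sqrt (1 + z^2) + 3 * z * (z / sqrt (1 + z^2))) (ux x t)
                                 * uxx x t * ut x t) 0 1 <= -3/2 * G + 6 * M^2 * S5).
      { eapply Rle_trans; [apply (neg_int_le _ (fun x => -3/2 * (uxx x t ^ 2 / sqrt (1 + ux x t ^ 2))
                                   + 6 * M^2 * sqrt (1 + ux x t ^ 2) ^ 5))|].
        - intros x _; cbv beta; cc.
        - intros x _; cbv beta; cc.
        - intros x Hx. cbv beta. rewrite (Hpde x t); try lra.
          pose proof (pw3 (ux x t) (uxx x t) (g x (u x t)) M (Hg _ _)). lra.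
        - rewrite int_comb; auto. fold G S5. lra. }
      assert (HG : 0 <= G).
      { apply int_nonneg; auto; [lra|]. intros x _. apply Rmult_le_pos; [apply pow2_ge_0|].
        left; apply Rinv_0_lt_compat; auto. }
      assert (HE : 1 <= E).
      { replace 1 with (integral (fun _ => 1) 0 1) by (rewrite int_const; ring).
        apply int_le; auto; [lra| apply ri_const|]. intros x _.
        destruct (sq_facts (ux x t)) as [_ [_ H1]]. assert (0 <= ux x t ^ 2) by apply pow2_ge_0. nra. }
      assert (Hsup : forall x, 0 <= x <= 1 -> 1 + ux x t ^ 2 <= E + A).
      { intros x Hx.
        assert (dV : forall z, derivable_pt_lim (fun z => 1 + ux z t ^ 2) z (2 * ux z t * uxx z t)).
        { intros z. apply (dl_comp (fun z => 1 + z^2) (fun y => ux y t)); auto. apply dl_sq. }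
        assert (Hxy : forall y, 0 <= y <= 1 -> 1 + ux x t ^ 2 <= 1 + ux y t ^ 2 + A).
        { intros y Hy. destruct (Rle_or_lt y x) as [Hyx|Hxy].
          - assert (F := ftc (fun z => 1 + ux z t ^ 2) (fun z => 2 * ux z t * uxx z t) y x Hyx
                       (fun z _ => dV z) (fun z Hz => cA z ltac:(lra))).
            assert (B := sub_int_le (fun z => 2 * ux z t * uxx z t) y x cA ltac:(lra) Hyx ltac:(lra)).
            cbv beta in F, B. fold A in B. assert (B' := Rle_abs (integral (fun z => 2 * ux z t * uxx z t) y x)). lra.
          - assert (F := ftc (fun z => 1 + ux z t ^ 2) (fun z => 2 * ux z t * uxx z t) x y ltac:(lra)
                       (fun z _ => dV z) (fun z Hz => cA z ltac:(lra))).
            assert (B := sub_int_le (fun z => 2 * ux z t * uxx z t) x y cA ltac:(lra) ltac:(lra) ltac:(lra)).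
            cbv beta in F, B. fold A in B. assert (B' := Rle_abs (integral (fun z => 2 * ux z t * uxx z t) x y)).
            assert (B'' := Rabs_Ropp (integral (fun z => 2 * ux z t * uxx z t) x y)).
            assert (B3 := Rle_abs (- integral (fun z => 2 * ux z t * uxx z t) x y)). lra. }
        replace (1 + ux x t ^ 2) with (integral (fun _ => 1 + ux x t ^ 2) 0 1) by (rewrite int_const; ring).
        replace (E + A) with (integral (fun y => 1 * ((1 + ux y t ^ 2) * sqrt (1 + ux y t ^ 2)) + A * (fun _ => 1) y) 0 1).
        2:{ rewrite int_comb; auto; [|apply ri_const]. rewrite int_const. fold E. ring. }
        apply int_le; [lra| apply ri_const| apply ri_comb; auto; apply ri_const|].
        intros y Hy. cbv beta. specialize (Hxy y ltac:(lra)).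
        destruct (sq_facts (ux y t)) as [_ [_ H1]]. specialize (vpos y). nra. }
      assert (HS5 : S5 <= (E + A) * E).
      { apply Rle_trans with (integral (fun x => (E + A) * ((1 + ux x t ^ 2) * sqrt (1 + ux x t ^ 2))) 0 1).
        2:{ rewrite int_scal; auto. right; reflexivity. }
        unfold S5. apply int_le; auto; [lra| apply ri_scal; auto|].
        intros x Hx. destruct (sq_facts (ux x t)) as [H0 [H2 _]].
        replace (sqrt (1 + ux x t ^ 2) ^ 5) with ((1 + ux x t ^ 2) * ((1 + ux x t ^ 2) * sqrt (1 + ux x t ^ 2)))
          by (set (s := sqrt (1 + ux x t ^ 2)) in *; rewrite <- H2; ring).
        apply Rmult_le_compat_r; [| apply Hsup; lra]. specialize (vpos x). nra. }
      assert (HA : forall e, 0 < e -> A <= e * G + / e * E).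
      { intros e He. unfold A, G, E. rewrite <- int_comb; auto.
        apply int_le; auto; [lra| apply ri_comb; auto|]. intros x _. apply pwA; auto. }
      set (e := / (4 * M^2 * E + 1)).
      assert (He : 0 < e) by (unfold e; apply Rinv_0_lt_compat; nra).
      assert (Hee : e * (4 * M^2 * E + 1) = 1) by (unfold e; field; nra).
      assert (Hie : / e = 4 * M^2 * E + 1) by (unfold e; rewrite Rinv_inv; auto).
      specialize (HA e He). rewrite Hie in HA.
      assert (K : 6 * M^2 * E * e <= 3/2).
      { apply Rmult_le_reg_r with (4 * M^2 * E + 1); [nra|].
        replace (6 * M^2 * E * e * (4 * M^2 * E + 1)) with (6 * M^2 * E * (e * (4 * M^2 * E + 1))) by ring.
        rewrite Hee. nra. }
      assert (HA0 : 0 <= A) by (unfold A; apply int_nonneg; [lra| intros x Hx; apply cpt_abs, cA; auto| intros; apply Rabs_pos]).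
      assert (HEA : 0 <= E + A) by lra.
      assert (St1 : 6 * M^2 * S5 <= 6 * M^2 * ((E + A) * E)) by (apply Rmult_le_compat_l; nra).
      assert (St2 : (E + A) * E <= (E + e * G + (4 * M^2 * E + 1) * E) * E) by (apply Rmult_le_compat_r; lra).
      assert (St3 : 6 * M^2 * ((E + e * G + (4 * M^2 * E + 1) * E) * E)
                    = 6 * M^2 * E * e * G + 12 * M^2 * E^2 + 24 * M^4 * E^3) by ring.
      assert (St4 : 6 * M^2 * E * e * G <= 3/2 * G) by (apply Rmult_le_compat_r; auto).
      assert (St5 : 12 * M^2 * E^2 <= 12 * M^2 * E^3) by (apply Rmult_le_compat_l; [nra|]; simpl; nra).
      assert (St6 : 0 <= M^4) by nra.
      assert (St7 : (12 * M^2 + 24 * M^4) * E^3 <= (1 + 13 * M^2 + 24 * M^4) * E^3).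
      { apply Rmult_le_compat_r; [apply pow_le; lra| nra]. }
      assert (St8 : 0 <= 6 * M^2) by nra.
      assert (St9 : 6 * M^2 * ((E + A) * E) <= 6 * M^2 * ((E + e * G + (4 * M^2 * E + 1) * E) * E))
        by (apply Rmult_le_compat_l; auto).
      assert (HC1 : 0 < 1 + 13 * M^2 + 24 * M^4) by nra.
      lra.
Qed.
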